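(* Let $C=C_{\{\mathcal{I}_n,\mathcal{J}_n\}}$ be a nice Cantor set, let $0<c<1$ be a constant with $J_{n,i}\cap cI_{n,i}\neq\emptyset$ for all $n,i$, and assume $|J_{n,i}|<\frac{1-c}{3}|I_{n,i}|$ for all $n,i$. Then there is a constant $c'>0$ such that for any two distinct $J,J'\in\mathcal{J}$, if $K$ is the interval between $J$ and $J'$, then $|K|\ge c'\min\{|J|,|J'|\}$.
   Context: A Cantor construction $\{\mathcal{I}_n,\mathcal{J}_n\}_n$: for each $n\in\mathbb{N}$, $\mathcal{I}_n=\{I_{n,i}\}_i$ is a collection of closed intervals with mutually disjoint interiors and $\mathcal{J}_n=\{J_{n,i}\}_i$ a collection of open intervals with $J_{n,i}\subset I_{n,i}$, such that each $I_{n+1,i}$ is contained in some $I_{n,j}$, $\bigcup\mathcal{I}_{n+1}=\bigcup\mathcal{I}_n\setminus\bigcup\mathcal{J}_n$, $\sup_j|I_{n,j}|\to0$, and $\bigcup\mathcal{I}_1$ is bounded; $C=\bigcap_n\bigcup_iI_{n,i}$, $\mathcal{I}=\bigcup_n\mathcal{I}_n$, $\mathcal{J}=\bigcup_n\mathcal{J}_n$. Nice: there is $0<c<1$ with $cI_{n,i}\cap J_{n,i}\neq\emptyset$ for all $n,i$ ($cI$ the interval concentric with $I$ of length $c|I|$). *)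

(* Defs.v *)
From Stdlib Require Export Reals.
Open Scope R_scope.

(* Levels are indexed by n : nat,
   starting at 0 (the paper's level 1 is our level 0).
   I_{n,i} = [Ia n i, Ib n i]  (closed interval, Ia <= Ib)
   J_{n,i} = (Ja n i, Jb n i)  (open interval, Ja <= Jb)               *)

Definition inI (idx : nat -> Type) (Ia Ib : forall n, idx n -> R)
  (n : nat) (i : idx n) (x : R) : Prop := Ia n i <= x <= Ib n i.

Definition inJ (idx : nat -> Type) (Ja Jb : forall n, idx n -> R)
  (n : nat) (i : idx n) (x : R) : Prop := Ja n i < x < Jb n i.

Definition cantor_construction (idx : nat -> Type)
  (Ia Ib Ja Jb : forall n, idx n -> R) : Prop :=
  (forall n i, Ia n i <= Ib n i) /\
  (forall n i, Ja n i <= Jb n i) /\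
  (forall n i x, inJ idx Ja Jb n i x -> inI idx Ia Ib n i x) /\
  (forall n (i j : idx n), i <> j -> forall x,
      ~ ((Ia n i < x < Ib n i) /\ (Ia n j < x < Ib n j))) /\
  (forall n (i : idx (S n)), exists j : idx n,
      forall x, inI idx Ia Ib (S n) i x -> inI idx Ia Ib n j x) /\
  (forall n x, (exists i, inI idx Ia Ib (S n) i x) <->
     ((exists i, inI idx Ia Ib n i x) /\ ~ (exists i, inJ idx Ja Jb n i x))) /\
  (forall eps, 0 < eps -> exists N, forall n, (N <= n)%nat ->
      forall j, Ib n j - Ia n j <= eps) /\
  (exists M, forall i x, inI idx Ia Ib 0 i x -> Rabs x <= M).

(* the interval c I concentric with I of length c |I| meets J *)
Definition nice_with (idx : nat -> Type) (Ia Ib Ja Jb : forall n, idx n -> R)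
  (c : R) : Prop :=
  0 < c < 1 /\
  forall n i, exists x,
    (Ia n i + Ib n i) / 2 - c * (Ib n i - Ia n i) / 2 <= x <=
    (Ia n i + Ib n i) / 2 + c * (Ib n i - Ia n i) / 2 /\
    inJ idx Ja Jb n i x.

Definition nice (idx : nat -> Type) (Ia Ib Ja Jb : forall n, idx n -> R) : Prop :=
  exists c, nice_with idx Ia Ib Ja Jb c.

(* Main.v *)
Require Import Defs.
From Stdlib Require Import Reals.
From Stdlib Require Import Lra Lia Classical Arith.
Open Scope R_scope.

Lemma level_lemma (idx : nat -> Type) (Ia Ib : forall n, idx n -> R) n :
  (forall n (i : idx (S n)), exists j : idx n,
      forall x, inI idx Ia Ib (S n) i x -> inI idx Ia Ib n j x) ->
  forall m, (n < m)%nat -> forall (k : idx m) x, inI idx Ia Ib m k x ->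
  exists j, inI idx Ia Ib (S n) j x.
Proof.
  intros Hc m. induction m as [|m IH]; intros Hlt k x Hx.
  - lia.
  - destruct (Nat.eq_dec n m) as [->|Hne].
    + exists k; exact Hx.
    + destruct (Hc m k) as [j Hj]. apply (IH ltac:(lia) j x (Hj x Hx)).
Qed.

Theorem lemma5p4 (idx : nat -> Type) (Ia Ib Ja Jb : forall n, idx n -> R) (c : R) :
  cantor_construction idx Ia Ib Ja Jb ->
  nice idx Ia Ib Ja Jb ->
  nice_with idx Ia Ib Ja Jb c ->
  (forall n i, Jb n i - Ja n i < (1 - c) / 3 * (Ib n i - Ia n i)) ->
  exists c', 0 < c' /\
    forall n (i : idx n) m (k : idx m),
      (Ja n i, Jb n i) <> (Ja m k, Jb m k) ->
      (* J = J_{n,i} lies to the left of J' = J_{m,k}; K = [Jb n i, Ja m k] *)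
      Jb n i <= Ja m k ->
      Ja m k - Jb n i >= c' * Rmin (Jb n i - Ja n i) (Jb m k - Ja m k).
Proof.
  intros [HI [HJ [Hsub [Hdis [Hcont [Hun _]]]]]] _ [[Hc0 Hc1] Hn] Hsz.
  assert (Jne : forall n i, Ja n i < Jb n i).
  { intros n i. destruct (Hn n i) as [x [_ [H1 H2]]]. lra. }
  assert (Jsub : forall n i, Ia n i <= Ja n i /\ Jb n i <= Ib n i).
  { intros n i. pose proof (Jne n i). split.
    - destruct (Rle_dec (Ia n i) (Ja n i)) as [h|h]; auto. exfalso.
      destruct (Rle_dec (Ia n i) (Jb n i)).
      + destruct (Hsub n i ((Ja n i + Ia n i)/2)) as [h1 h2]; unfold inJ; lra.
      + destruct (Hsub n i ((Ja n i + Jb n i)/2)) as [h1 h2]; unfold inJ; lra.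
    - destruct (Rle_dec (Jb n i) (Ib n i)) as [h|h]; auto. exfalso.
      destruct (Rle_dec (Ja n i) (Ib n i)).
      + destruct (Hsub n i ((Jb n i + Ib n i)/2)) as [h1 h2]; unfold inJ; lra.
      + destruct (Hsub n i ((Ja n i + Jb n i)/2)) as [h1 h2]; unfold inJ; lra. }
  assert (Nb : forall n i, Ja n i - Ia n i > (Jb n i - Ja n i)/2 /\
                           Ib n i - Jb n i > (Jb n i - Ja n i)/2).
  { intros n i. destruct (Hn n i) as [x [[h1 h2] [h3 h4]]]. pose proof (Hsz n i).
    pose proof (HI n i).
    set (L := Ib n i - Ia n i) in *.
    assert (Hb : Ib n i = Ia n i + L) by (unfold L; ring).
    rewrite Hb in h1, h2. 
    assert (0 <= (1 - c) * L) by (apply Rmult_le_pos; lra).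
    split; nra. }
  exists (1/2). split; [lra|].
  intros n i m k Hne Hle.
  assert (Rmin (Jb n i - Ja n i) (Jb m k - Ja m k) <= Jb n i - Ja n i) by apply Rmin_l.
  assert (Rmin (Jb n i - Ja n i) (Jb m k - Ja m k) <= Jb m k - Ja m k) by apply Rmin_r.
  pose proof (Jne n i); pose proof (Jne m k); pose proof (Jsub n i); pose proof (Jsub m k).
  pose proof (Nb n i); pose proof (Nb m k).
  destruct (lt_eq_lt_dec n m) as [[Hlt|Heq]|Hgt].
  - assert (Jb n i <= Ia m k).
    { destruct (Rle_dec (Jb n i) (Ia m k)) as [h|h]; auto. exfalso.
      set (x := (Rmax (Ia m k) (Ja n i) + Jb n i)/2).
      assert (Ia m k <= x /\ Ja n i < x /\ x < Jb n i).
      { unfold x;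
        unfold Rmax; destruct (Rle_dec (Ia m k) (Ja n i)); lra. }
      destruct (level_lemma idx Ia Ib n Hcont m Hlt k x) as [j Hj].
      { unfold inI; lra. }
      assert (Hx : exists j, inI idx Ia Ib (S n) j x) by (exists j; exact Hj).
      apply Hun in Hx. destruct Hx as [_ Hx]. apply Hx. exists i. unfold inJ; lra. }
    lra.
  - subst m.
    assert (i <> k) by (intro e; subst k; apply Hne; reflexivity).
    assert (Jb n i <= Ia n k).
    { destruct (Rle_dec (Jb n i) (Ia n k)) as [h|h]; auto. exfalso.
      set (x := (Rmax (Ia n k) (Ja n i) + Jb n i)/2).
      assert (Ia n k < x /\ Ja n i < x /\ x < Jb n i).
      { unfold x;
        unfold Rmax; destruct (Rle_dec (Ia n k) (Ja n i)); lra. }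
      apply (Hdis n i k H7 x). lra. }
    lra.
  - assert (Ib n i <= Ja m k).
    { destruct (Rle_dec (Ib n i) (Ja m k)) as [h|h]; auto. exfalso.
      set (x := (Ja m k + Rmin (Ib n i) (Jb m k))/2).
      assert (Ja m k < x /\ x <= Ib n i /\ x < Jb m k).
      { unfold x;
        unfold Rmin; destruct (Rle_dec (Ib n i) (Jb m k)); lra. }
      destruct (level_lemma idx Ia Ib m Hcont n Hgt i x) as [j Hj].
      { unfold inI; lra. }
      assert (Hx : exists j, inI idx Ia Ib (S m) j x) by (exists j; exact Hj).
      apply Hun in Hx. destruct Hx as [_ Hx]. apply Hx. exists k. unfold inJ; lra. }
    lra.
Qed.
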